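(* $\{\omega^2, (\omega^2)^\star\} \leq_c \{\omega^3, (\omega^3)^\star\}$.
   Context: Structures have domains contained in $\omega$. For countable structures $\mathcal{A},\mathcal{B}$, the class $\{\mathcal{A},\mathcal{B}\}$ denotes the class of all structures (with domain $\subseteq\omega$) isomorphic to $\mathcal{A}$ or to $\mathcal{B}$. Linear orders are in the language $\{<\}$; $L^\star$ is the reverse of a linear order $L$; $\omega^2$, $\omega^3$ are ordinal order types. An enumeration operator $\Gamma$ is a c.e. set of pairs $(\alpha,\varphi)$ with $\alpha$ a finite set of basic (atomic or negated atomic) sentences of the input language with constants from $\omega$ and $\varphi$ a basic sentence of the output language with constants from $\omega$; $\Gamma(X)=\{\varphi : (\alpha,\varphi)\in\Gamma,\ \alpha\subseteq X\}$. $\Gamma$ is a computable embedding of $\mathcal{K}_0$ into $\mathcal{K}_1$ ($\mathcal{K}_0\leq_c\mathcal{K}_1$) if for every $\mathcal{A}\in\mathcal{K}_0$, $\Gamma$ applied to the atomic diagram of $\mathcal{A}$ is the atomic diagram of a structure $\Gamma(\mathcal{A})\in\mathcal{K}_1$, and for all $\mathcal{A},\mathcal{B}\in\mathcal{K}_0$, $\mathcal{A}\cong\mathcal{B}$ iff $\Gamma(\mathcal{A})\cong\Gamma(\mathcal{B})$. *)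

(* Defs.v *)
From Stdlib Require Import Arith List.
Import ListNotations.

(* Primitive recursive functions (untyped syntax; missing arguments are
   read as 0), used to define c.e. sets via the Kleene normal form:
   X is c.e. iff X = { x | exists n, f(x, n) = 0 } for some primitive
   recursive f. *)
Inductive PR : Type :=
| PZero : PR
| PSucc : PR
| PProj : nat -> PR
| PComp : PR -> list PR -> PR
| PRec  : PR -> PR -> PR.

Fixpoint pr_eval (f : PR) (xs : list nat) {struct f} : nat :=
  match f with
  | PZero => 0
  | PSucc => S (hd 0 xs)
  | PProj i => nth i xs 0
  | PComp g hs =>
      pr_eval g ((fix ev (l : list PR) : list nat :=
                    match l with
                    | nil => nil
                    | h :: t => pr_eval h xs :: ev t
                    end) hs)
  | PRec g h =>
      let ys := tl xs in
      (fix r (n : nat) : nat :=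
         match n with
         | 0 => pr_eval g ys
         | S m => pr_eval h (m :: r m :: ys)
         end) (hd 0 xs)
  end.

Definition ce_set (X : nat -> Prop) : Prop :=
  exists f : PR, forall x, X x <-> exists n, pr_eval f [x; n] = 0.

Definition cpair (a b : nat) : nat := (a + b) * (a + b + 1) / 2 + b.

(* Basic sentences of the language {<} (with equality) with constants
   from omega. *)
Inductive atom : Type :=
| AEq : nat -> nat -> atom
| ALt : nat -> nat -> atom.

Inductive basic : Type :=
| BPos : atom -> basic
| BNeg : atom -> basic.

Definition code_atom (t : atom) : nat :=
  match t with
  | AEq a b => cpair 0 (cpair a b)
  | ALt a b => cpair 1 (cpair a b)
  end.

Definition code_basic (s : basic) : nat :=
  match s with
  | BPos t => cpair 0 (code_atom t)
  | BNeg t => cpair 1 (code_atom t)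
  end.

Fixpoint code_list (l : list basic) : nat :=
  match l with
  | nil => 0
  | s :: t => S (cpair (code_basic s) (code_list t))
  end.

Definition code_pair (alpha : list basic) (phi : basic) : nat :=
  cpair (code_list alpha) (code_basic phi).

(* Enumeration operators: a set of pairs (alpha, phi), alpha a finite
   set (given as a list) of basic sentences, phi a basic sentence. *)
Definition enum_op := list basic -> basic -> Prop.

Definition is_ce_op (G : enum_op) : Prop :=
  ce_set (fun x => exists alpha phi, x = code_pair alpha phi /\ G alpha phi).

Definition apply_op (G : enum_op) (X : basic -> Prop) : basic -> Prop :=
  fun phi => exists alpha, G alpha phi /\ (forall s, In s alpha -> X s).

(* Structures in the language {<} with domain contained in omega. *)
Record Str : Type := { sdom : nat -> Prop; slt : nat -> nat -> Prop }.

Definition holds (A : Str) (t : atom) : Prop :=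
  match t with
  | AEq a b => a = b
  | ALt a b => slt A a b
  end.

Definition consts (t : atom) : nat * nat :=
  match t with AEq a b => (a, b) | ALt a b => (a, b) end.

Definition diag (A : Str) (s : basic) : Prop :=
  match s with
  | BPos t => sdom A (fst (consts t)) /\ sdom A (snd (consts t)) /\ holds A t
  | BNeg t => sdom A (fst (consts t)) /\ sdom A (snd (consts t)) /\ ~ holds A t
  end.

Definition str_iso (A B : Str) : Prop :=
  exists f : nat -> nat,
    (forall x, sdom A x -> sdom B (f x)) /\
    (forall y, sdom B y -> exists x, sdom A x /\ f x = y) /\
    (forall x y, sdom A x -> sdom A y -> f x = f y -> x = y) /\
    (forall x y, sdom A x -> sdom A y -> (slt A x y <-> slt B (f x) (f y))).

Record OrdT : Type := { car : Type; olt : car -> car -> Prop }.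

Definition iso_to (A : Str) (L : OrdT) : Prop :=
  exists f : nat -> car L,
    (forall y, exists x, sdom A x /\ f x = y) /\
    (forall x y, sdom A x -> sdom A y -> f x = f y -> x = y) /\
    (forall x y, sdom A x -> sdom A y -> (slt A x y <-> olt L (f x) (f y))).

Definition class2 (L1 L2 : OrdT) (A : Str) : Prop := iso_to A L1 \/ iso_to A L2.

Definition reverse (L : OrdT) : OrdT := {| car := car L; olt := fun x y => olt L y x |}.

(* omega^2 = omega copies of omega: pairs ordered lexicographically,
   first coordinate most significant. *)
Definition omega2 : OrdT :=
  {| car := nat * nat;
     olt := fun p q => fst p < fst q \/ (fst p = fst q /\ snd p < snd q) |}.

(* omega^3: triples (i,(j,k)) ordered lexicographically. *)
Definition omega3 : OrdT :=
  {| car := nat * (nat * nat);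
     olt := fun p q => fst p < fst q \/
              (fst p = fst q /\ olt omega2 (snd p) (snd q)) |}.

Definition comp_embeds (K0 K1 : Str -> Prop) : Prop :=
  exists G : enum_op, is_ce_op G /\
    (forall A, K0 A -> exists C, K1 C /\
        (forall s, apply_op G (diag A) s <-> diag C s)) /\
    (forall A B C D, K0 A -> K0 B ->
        (forall s, apply_op G (diag A) s <-> diag C s) ->
        (forall s, apply_op G (diag B) s <-> diag D s) ->
        (str_iso A B <-> str_iso C D)).

(* Main.v *)
Require Import Defs.
From Stdlib Require Import Arith List Lia PeanoNat Classical ClassicalEpsilon FinFun.
Import ListNotations.

Fixpoint tri (s : nat) : nat := match s with 0 => 0 | S m => tri m + S m end.
Lemma tri_spec s : 2 * tri s = s * (s+1).
Proof. induction s; simpl; nia. Qed.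
Lemma cpair_tri a b : cpair a b = tri (a+b) + b.
Proof. unfold cpair. rewrite <- tri_spec. rewrite Nat.mul_comm, Nat.div_mul; lia. Qed.
Lemma tri_mono a b : a <= b -> tri a <= tri b.
Proof. induction 1; simpl; lia. Qed.
Lemma tri_ge s : s <= tri s.
Proof. induction s; simpl; lia. Qed.

Fixpoint cntf (k n : nat) : nat := match k with 0 => 0 | S m => cntf m n + (1 - (tri (S m) - n)) end.
Definition us n := cntf n n.
Definition unp2 n := n - tri (us n).
Definition unp1 n := us n - unp2 n.

Lemma cntf_spec s b k : b <= s -> cntf k (tri s + b) = Nat.min k s.
Proof.
  intros Hb. induction k as [|m IH]. simpl. lia.
  change (cntf (S m) (tri s + b)) with (cntf m (tri s + b) + (1 - (tri (S m) - (tri s + b)))).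
  rewrite IH. destruct (le_lt_dec (S m) s) as [H|H].
  - pose proof (tri_mono _ _ H). lia.
  - assert (tri (S s) <= tri (S m)) by (apply tri_mono; lia). change (tri (S s)) with (tri s + S s) in H0. lia.
Qed.
Lemma us_cpair a b : us (cpair a b) = a + b.
Proof. unfold us. rewrite cpair_tri. rewrite cntf_spec by lia. pose proof (tri_ge (a+b)). lia. Qed.
Lemma unp2_cpair a b : unp2 (cpair a b) = b.
Proof. unfold unp2. rewrite us_cpair. rewrite cpair_tri. lia. Qed.
Lemma unp1_cpair a b : unp1 (cpair a b) = a.
Proof. unfold unp1. rewrite unp2_cpair, us_cpair. lia. Qed.
Lemma cpair_inj a b c d : cpair a b = cpair c d -> a = c /\ b = d.
Proof. intros H. split; [rewrite <- (unp1_cpair a b), <- (unp1_cpair c d) | rewrite <- (unp2_cpair a b), <- (unp2_cpair c d)]; congruence. Qed.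

Lemma PRec_0 g h ys : pr_eval (PRec g h) (0 :: ys) = pr_eval g ys.
Proof. reflexivity. Qed.
Lemma PRec_S g h m ys : pr_eval (PRec g h) (S m :: ys) = pr_eval h (m :: pr_eval (PRec g h) (m :: ys) :: ys).
Proof. reflexivity. Qed.
Lemma PComp1 g a xs : pr_eval (PComp g [a]) xs = pr_eval g [pr_eval a xs].
Proof. reflexivity. Qed.
Lemma PComp2 g a b xs : pr_eval (PComp g [a;b]) xs = pr_eval g [pr_eval a xs; pr_eval b xs].
Proof. reflexivity. Qed.
Lemma PProj_eq i xs : pr_eval (PProj i) xs = nth i xs 0.
Proof. reflexivity. Qed.
Lemma PSucc_eq xs : pr_eval PSucc xs = S (hd 0 xs).
Proof. reflexivity. Qed.
Lemma PZero_eq xs : pr_eval PZero xs = 0.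
Proof. reflexivity. Qed.
Ltac prs := repeat (rewrite ?PRec_0, ?PRec_S, ?PComp1, ?PComp2, ?PProj_eq, ?PSucc_eq, ?PZero_eq); cbn [nth hd].

Fixpoint cstPR k := match k with 0 => PZero | S k => PComp PSucc [cstPR k] end.
Lemma cstPR_ok k xs : pr_eval (cstPR k) xs = k.
Proof. induction k; simpl; auto. Qed.
Definition addPR := PRec (PProj 0) (PComp PSucc [PProj 1]).
Lemma addPR_ok u v l : pr_eval addPR (u :: v :: l) = u + v.
Proof. unfold addPR. induction u; prs; auto. rewrite IHu. lia. Qed.
Definition mulPR := PRec PZero (PComp addPR [PProj 1; PProj 2]).
Lemma mulPR_ok u v l : pr_eval mulPR (u :: v :: l) = u * v.
Proof. unfold mulPR. induction u; prs; auto. rewrite addPR_ok, IHu. lia. Qed.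
Definition predPR := PRec PZero (PProj 0).
Lemma predPR_ok u l : pr_eval predPR (u :: l) = pred u.
Proof. destruct u; reflexivity. Qed.
Definition subrPR := PRec (PProj 0) (PComp predPR [PProj 1]).
Lemma subrPR_ok v u l : pr_eval subrPR (v :: u :: l) = u - v.
Proof. unfold subrPR. induction v; prs. lia. rewrite predPR_ok, IHv. lia. Qed.
Definition subPR := PComp subrPR [PProj 1; PProj 0].
Lemma subPR_ok u v l : pr_eval subPR (u :: v :: l) = u - v.
Proof. unfold subPR. prs. apply subrPR_ok. Qed.
Definition triPR := PRec PZero (PComp addPR [PProj 1; PComp PSucc [PProj 0]]).
Lemma triPR_ok s l : pr_eval triPR (s :: l) = tri s.
Proof. unfold triPR. induction s; prs; auto. rewrite addPR_ok, IHs. reflexivity. Qed.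
Definition cpPR := PComp addPR [PComp triPR [PComp addPR [PProj 0; PProj 1]]; PProj 1].
Lemma cpPR_ok u v l : pr_eval cpPR (u :: v :: l) = cpair u v.
Proof. unfold cpPR. prs. rewrite addPR_ok, triPR_ok, addPR_ok. rewrite cpair_tri. reflexivity. Qed.
Definition cntPR := PRec PZero (PComp addPR [PProj 1; PComp subPR [cstPR 1;
   PComp subPR [PComp triPR [PComp PSucc [PProj 0]]; PProj 2]]]).
Lemma cntPR_ok k n l : pr_eval cntPR (k :: n :: l) = cntf k n.
Proof. unfold cntPR. induction k; prs; auto. rewrite cstPR_ok, addPR_ok, subPR_ok, subPR_ok, triPR_ok, IHk. reflexivity. Qed.
Definition usPR := PComp cntPR [PProj 0; PProj 0].
Lemma usPR_ok n l : pr_eval usPR (n :: l) = us n.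
Proof. unfold usPR. prs. rewrite cntPR_ok. reflexivity. Qed.
Definition u2PR := PComp subPR [PProj 0; PComp triPR [usPR]].
Lemma u2PR_ok n l : pr_eval u2PR (n :: l) = unp2 n.
Proof. unfold u2PR. prs. rewrite usPR_ok, triPR_ok, subPR_ok. reflexivity. Qed.
Definition u1PR := PComp subPR [usPR; u2PR].
Lemma u1PR_ok n l : pr_eval u1PR (n :: l) = unp1 n.
Proof. unfold u1PR. prs. rewrite usPR_ok, u2PR_ok, subPR_ok. reflexivity. Qed.

Inductive ex := X0 | X1 | Cst (k : nat) | Sc (e : ex) | EAdd (e1 e2 : ex) | EMul (e1 e2 : ex)
  | ESub (e1 e2 : ex) | Cp (e1 e2 : ex) | U1 (e : ex) | U2 (e : ex).
Fixpoint eval (e : ex) (x n : nat) : nat :=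
  match e with
  | X0 => x | X1 => n | Cst k => k | Sc e => S (eval e x n)
  | EAdd a b => eval a x n + eval b x n
  | EMul a b => eval a x n * eval b x n
  | ESub a b => eval a x n - eval b x n
  | Cp a b => cpair (eval a x n) (eval b x n)
  | U1 e => unp1 (eval e x n) | U2 e => unp2 (eval e x n)
  end.
Fixpoint comp (e : ex) : PR :=
  match e with
  | X0 => PProj 0 | X1 => PProj 1 | Cst k => cstPR k | Sc e => PComp PSucc [comp e]
  | EAdd a b => PComp addPR [comp a; comp b]
  | EMul a b => PComp mulPR [comp a; comp b]
  | ESub a b => PComp subPR [comp a; comp b]
  | Cp a b => PComp cpPR [comp a; comp b]
  | U1 e => PComp u1PR [comp e] | U2 e => PComp u2PR [comp e]
  end.
Lemma comp_ok e xs : pr_eval (comp e) xs = eval e (nth 0 xs 0) (nth 1 xs 0).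
Proof.
  induction e; cbn [comp eval]; prs; try rewrite IHe; try rewrite IHe1; try rewrite IHe2; auto.
  - apply cstPR_ok.
  - apply addPR_ok. - apply mulPR_ok. - apply subPR_ok. - apply cpPR_ok.
  - apply u1PR_ok. - apply u2PR_ok.
Qed.

Inductive sb := SPE (e1 e2 : ex) | SPL (e1 e2 : ex) | SNE (e1 e2 : ex) | SNL (e1 e2 : ex).
Definition sb_eval (s : sb) (x n : nat) : basic :=
  match s with
  | SPE a b => BPos (AEq (eval a x n) (eval b x n))
  | SPL a b => BPos (ALt (eval a x n) (eval b x n))
  | SNE a b => BNeg (AEq (eval a x n) (eval b x n))
  | SNL a b => BNeg (ALt (eval a x n) (eval b x n))
  end.
Definition sb_code (s : sb) : ex :=
  match s with
  | SPE a b => Cp (Cst 0) (Cp (Cst 0) (Cp a b))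
  | SPL a b => Cp (Cst 0) (Cp (Cst 1) (Cp a b))
  | SNE a b => Cp (Cst 1) (Cp (Cst 0) (Cp a b))
  | SNL a b => Cp (Cst 1) (Cp (Cst 1) (Cp a b))
  end.
Lemma sb_code_ok s x n : eval (sb_code s) x n = code_basic (sb_eval s x n).
Proof. destruct s; reflexivity. Qed.
Fixpoint lcode (l : list sb) : ex :=
  match l with [] => Cst 0 | s :: t => Sc (Cp (sb_code s) (lcode t)) end.
Lemma lcode_ok l x n : eval (lcode l) x n = code_list (map (fun s => sb_eval s x n) l).
Proof. induction l; simpl; auto. rewrite sb_code_ok, IHl. reflexivity. Qed.

Fixpoint nox (e : ex) : bool :=
  match e with
  | X0 => false | X1 | Cst _ => true
  | Sc e | U1 e | U2 e => nox e
  | EAdd a b | EMul a b | ESub a b | Cp a b => nox a && nox b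
  end.
Lemma nox_eval e x y n : nox e = true -> eval e x n = eval e y n.
Proof.
  induction e; simpl; intros H; auto; try discriminate;
  try (apply andb_prop in H; destruct H as [Ha Hb]; rewrite IHe1, IHe2 by auto; reflexivity);
  rewrite IHe by auto; reflexivity.
Qed.
Definition sbnox (s : sb) : bool :=
  match s with SPE a b | SPL a b | SNE a b | SNL a b => nox a && nox b end.
Lemma sbnox_eval s x y n : sbnox s = true -> sb_eval s x n = sb_eval s y n.
Proof. destruct s; simpl; intros H; apply andb_prop in H; destruct H; rewrite (nox_eval _ x y), (nox_eval e2 x y); auto. Qed.

Record fam := mkfam { alph : list sb; phis : list sb; side : ex }.

Fixpoint u2it k := match k with 0 => X1 | S k => U2 (u2it k) end.
Definition V k := U1 (u2it k).
Definition Wsb a b c c' := [SPE a a; SPL c b; SPL b c'].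
Definition ltE c a := ESub (Sc c) a.
Definition ph4sb x y := [SPL x y; SNL y x; SNE x y; SNE y x].

Definition R0 := mkfam (Wsb (V 0) (V 1) (V 2) (V 3))
  [SPE (Cp (V 0) (V 1)) (Cp (V 0) (V 1)); SNL (Cp (V 0) (V 1)) (Cp (V 0) (V 1))]
  (EAdd (ltE (V 2) (V 0)) (ltE (V 3) (V 0))).
Definition R1 := mkfam (Wsb (V 0) (V 1) (V 2) (V 3) ++ Wsb (V 4) (V 5) (V 6) (V 7) ++ [SPL (V 0) (V 4)])
  (ph4sb (Cp (V 0) (V 1)) (Cp (V 4) (V 5)))
  (EAdd (EAdd (ltE (V 2) (V 0)) (ltE (V 3) (V 0))) (EAdd (ltE (V 6) (V 4)) (ltE (V 7) (V 4)))).
Definition R2 := mkfam (Wsb (V 0) (V 1) (V 2) (V 3) ++ Wsb (V 0) (V 4) (V 5) (V 6) ++ [SPL (V 1) (V 4)])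
  (ph4sb (Cp (V 0) (V 1)) (Cp (V 0) (V 4)))
  (EAdd (EAdd (ltE (V 2) (V 0)) (ltE (V 3) (V 0))) (EAdd (ltE (V 5) (V 0)) (ltE (V 6) (V 0)))).
Definition fams := [R0; R1; R2].

Definition famnox (f : fam) : bool :=
  forallb sbnox (alph f) && forallb sbnox (phis f) && nox (side f).
Lemma fams_nox : forallb famnox fams = true.
Proof. reflexivity. Qed.

Definition G : enum_op := fun alpha phi =>
  exists n fm, In fm fams /\ eval (side fm) 0 n = 0 /\
    alpha = map (fun s => sb_eval s 0 n) (alph fm) /\
    In phi (map (fun s => sb_eval s 0 n) (phis fm)).

Fixpoint prodE (l : list ex) : ex := match l with [] => Cst 1 | e :: t => EMul e (prodE t) end.
Lemma prodE_0 l x n : eval (prodE l) x n = 0 <-> exists e, In e l /\ eval e x n = 0.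
Proof.
  induction l; simpl. split; [discriminate|intros [e [[] _]]].
  rewrite Nat.mul_eq_0, IHl. split.
  - intros [H|[e [H1 H2]]]; eauto.
  - intros [e [[<-|H1] H2]]; eauto.
Qed.
Definition Dist a b := EAdd (ESub a b) (ESub b a).
Lemma Dist_0 a b x n : eval (Dist a b) x n = 0 <-> eval a x n = eval b x n.
Proof. simpl. lia. Qed.
Definition famE (fm : fam) : ex :=
  EAdd (prodE (map (fun p => Dist X0 (Cp (lcode (alph fm)) (sb_code p))) (phis fm))) (side fm).
Definition Ftot := prodE (map famE fams).

Lemma G_ce : is_ce_op G.
Proof.
  exists (comp Ftot). intros x. setoid_rewrite comp_ok. simpl nth.
  unfold Ftot. setoid_rewrite prodE_0. split.
  - intros [alpha [phi [-> [n [fm [Hfm [Hs [-> Hphi]]]]]]]].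
    exists n, (famE fm). split. apply in_map; auto.
    pose proof fams_nox as Hn. unfold fams in Hfm, Hn. simpl in Hn.
    assert (Hfn : famnox fm = true).
    { destruct Hfm as [<-|[<-|[<-|[]]]]; reflexivity. }
    unfold famnox in Hfn. apply andb_prop in Hfn as [Hfn Hsn]. apply andb_prop in Hfn as [Han Hpn].
    unfold famE. simpl eval. apply Nat.eq_add_0. split.
    + apply prodE_0. apply in_map_iff in Hphi as [p [<- Hp]].
      exists (Dist X0 (Cp (lcode (alph fm)) (sb_code p))). split. apply in_map_iff; eauto.
      apply Dist_0. simpl eval. rewrite lcode_ok, sb_code_ok. unfold code_pair.
      rewrite forallb_forall in Han, Hpn.
      f_equal. f_equal. apply map_ext_in. intros s Hs'. cbv beta. apply sbnox_eval. auto.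
      f_equal. apply sbnox_eval. auto.
    + rewrite (nox_eval _ _ 0); auto.
  - intros [n [e [He H0]]]. apply in_map_iff in He as [fm [<- Hfm]].
    pose proof fams_nox as Hn. unfold fams in Hfm, Hn. simpl in Hn.
    assert (Hfn : famnox fm = true).
    { destruct Hfm as [<-|[<-|[<-|[]]]]; reflexivity. }
    unfold famnox in Hfn. apply andb_prop in Hfn as [Hfn Hsn]. apply andb_prop in Hfn as [Han Hpn].
    rewrite forallb_forall in Han, Hpn.
    unfold famE in H0. simpl eval in H0. apply Nat.eq_add_0 in H0 as [H1 H2].
    apply prodE_0 in H1 as [d [Hd H1]]. apply in_map_iff in Hd as [p [<- Hp]].
    apply Dist_0 in H1. simpl eval in H1. rewrite lcode_ok, sb_code_ok in H1.
    exists (map (fun s => sb_eval s 0 n) (alph fm)), (sb_eval p 0 n). split.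
    + rewrite H1. unfold code_pair. f_equal.
      * f_equal. apply map_ext_in. intros s Hs'. cbv beta. apply sbnox_eval. auto.
      * f_equal. apply sbnox_eval; auto.
    + exists n, fm. repeat split; auto. rewrite (nox_eval _ _ x); auto.
      apply (in_map (fun s => sb_eval s 0 n)); auto.
Qed.

Definition W (a b c c' : nat) : list basic := [BPos (AEq a a); BPos (ALt c b); BPos (ALt b c')].
Definition ph4 x y := [BPos (ALt x y); BNeg (ALt y x); BNeg (AEq x y); BNeg (AEq y x)].
Definition enc (l : list nat) := fold_right cpair 0 l.
Definition vv k n := eval (V k) 0 n.



Lemma skipn_S' k (l : list nat) : skipn (S k) l = tl (skipn k l).
Proof. revert k; induction l; intros k; destruct k; simpl; auto. rewrite <- IHl. reflexivity. Qed.
Lemma unp2_enc l : unp2 (enc l) = enc (tl l).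
Proof. destruct l; simpl. reflexivity. apply unp2_cpair. Qed.
Lemma unp1_enc l : unp1 (enc l) = hd 0 l.
Proof. destruct l; simpl. reflexivity. apply unp1_cpair. Qed.
Lemma u2it_enc k l x : eval (u2it k) x (enc l) = enc (skipn k l).
Proof. induction k; cbn [u2it eval]. reflexivity. rewrite IHk, unp2_enc, skipn_S'. reflexivity. Qed.
Lemma hd_skipn k (l : list nat) : hd 0 (skipn k l) = nth k l 0.
Proof. revert l; induction k; intros l; destruct l; simpl; auto. Qed.
Lemma vv_enc k l : vv k (enc l) = nth k l 0.
Proof. unfold vv, V. simpl. rewrite u2it_enc, unp1_enc, hd_skipn. reflexivity. Qed.

Lemma R0_alpha n : map (fun s => sb_eval s 0 n) (alph R0) = W (vv 0 n) (vv 1 n) (vv 2 n) (vv 3 n).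
Proof. reflexivity. Qed.
Lemma R0_phis n : map (fun s => sb_eval s 0 n) (phis R0) =
  [BPos (AEq (cpair (vv 0 n) (vv 1 n)) (cpair (vv 0 n) (vv 1 n)));
   BNeg (ALt (cpair (vv 0 n) (vv 1 n)) (cpair (vv 0 n) (vv 1 n)))].
Proof. reflexivity. Qed.
Lemma R0_side n : eval (side R0) 0 n = (S (vv 2 n) - vv 0 n) + (S (vv 3 n) - vv 0 n).
Proof. reflexivity. Qed.
Lemma R1_alpha n : map (fun s => sb_eval s 0 n) (alph R1) =
  W (vv 0 n) (vv 1 n) (vv 2 n) (vv 3 n) ++ W (vv 4 n) (vv 5 n) (vv 6 n) (vv 7 n) ++ [BPos (ALt (vv 0 n) (vv 4 n))].
Proof. reflexivity. Qed.
Lemma R1_phis n : map (fun s => sb_eval s 0 n) (phis R1) = ph4 (cpair (vv 0 n) (vv 1 n)) (cpair (vv 4 n) (vv 5 n)).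
Proof. reflexivity. Qed.
Lemma R1_side n : eval (side R1) 0 n = ((S (vv 2 n) - vv 0 n) + (S (vv 3 n) - vv 0 n)) + ((S (vv 6 n) - vv 4 n) + (S (vv 7 n) - vv 4 n)).
Proof. reflexivity. Qed.
Lemma R2_alpha n : map (fun s => sb_eval s 0 n) (alph R2) =
  W (vv 0 n) (vv 1 n) (vv 2 n) (vv 3 n) ++ W (vv 0 n) (vv 4 n) (vv 5 n) (vv 6 n) ++ [BPos (ALt (vv 1 n) (vv 4 n))].
Proof. reflexivity. Qed.
Lemma R2_phis n : map (fun s => sb_eval s 0 n) (phis R2) = ph4 (cpair (vv 0 n) (vv 1 n)) (cpair (vv 0 n) (vv 4 n)).
Proof. reflexivity. Qed.
Lemma R2_side n : eval (side R2) 0 n = ((S (vv 2 n) - vv 0 n) + (S (vv 3 n) - vv 0 n)) + ((S (vv 5 n) - vv 0 n) + (S (vv 6 n) - vv 0 n)).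
Proof. reflexivity. Qed.

Lemma G_char alpha phi : G alpha phi <->
  (exists a b c c', c < a /\ c' < a /\ alpha = W a b c c' /\
     In phi [BPos (AEq (cpair a b) (cpair a b)); BNeg (ALt (cpair a b) (cpair a b))])
  \/ (exists a b c c' a' b' d d', c < a /\ c' < a /\ d < a' /\ d' < a' /\
     alpha = W a b c c' ++ W a' b' d d' ++ [BPos (ALt a a')] /\ In phi (ph4 (cpair a b) (cpair a' b')))
  \/ (exists a b c c' b' d d', c < a /\ c' < a /\ d < a /\ d' < a /\
     alpha = W a b c c' ++ W a b' d d' ++ [BPos (ALt b b')] /\ In phi (ph4 (cpair a b) (cpair a b'))).
Proof.
  split.
  - intros [n [fm [Hfm [Hs [-> Hp]]]]].
    destruct Hfm as [<-|[<-|[<-|[]]]].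
    + left. rewrite R0_side in Hs. rewrite R0_alpha. rewrite R0_phis in Hp.
      do 4 eexists. repeat split; eauto; lia.
    + right; left. rewrite R1_side in Hs. rewrite R1_alpha. rewrite R1_phis in Hp.
      do 8 eexists. repeat split; eauto; lia.
    + right; right. rewrite R2_side in Hs. rewrite R2_alpha. rewrite R2_phis in Hp.
      do 7 eexists. repeat split; eauto; lia.
  - intros [H|[H|H]].
    + destruct H as [a [b [c [c' [H1 [H2 [-> Hp]]]]]]].
      exists (enc [a;b;c;c']), R0. split. simpl; auto.
      rewrite R0_side, R0_alpha, R0_phis, !vv_enc. simpl nth. split. lia. auto.
    + destruct H as [a [b [c [c' [a' [b' [d [d' [H1 [H2 [H3 [H4 [-> Hp]]]]]]]]]]]]].
      exists (enc [a;b;c;c';a';b';d;d']), R1. split. simpl; auto.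
      rewrite R1_side, R1_alpha, R1_phis, !vv_enc. simpl nth. split. lia. auto.
    + destruct H as [a [b [c [c' [b' [d [d' [H1 [H2 [H3 [H4 [-> Hp]]]]]]]]]]]].
      exists (enc [a;b;c;c';b';d;d']), R2. split. simpl; auto.
      rewrite R2_side, R2_alpha, R2_phis, !vv_enc. simpl nth. split. lia. auto.
Qed.

Definition linear {T} (D : T -> Prop) (R : T -> T -> Prop) :=
  (forall x, D x -> ~ R x x) /\
  (forall x y z, D x -> D y -> D z -> R x y -> R y z -> R x z) /\
  (forall x y, D x -> D y -> x = y \/ R x y \/ R y x).

Definition Cdom (A : Str) x := exists a b c c', x = cpair a b /\ c < a /\ c' < a /\
  forall s, In s (W a b c c') -> diag A s.
Definition Cslt (A : Str) x y := slt A (unp1 x) (unp1 y) \/ (unp1 x = unp1 y /\ slt A (unp2 x) (unp2 y)).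
Definition Cstr A := {| sdom := Cdom A; slt := Cslt A |}.

Lemma W_diag A a b c c' : (forall s, In s (W a b c c') -> diag A s) <->
  sdom A a /\ sdom A b /\ sdom A c /\ sdom A c' /\ slt A c b /\ slt A b c'.
Proof.
  unfold W; simpl. split.
  - intros H. pose proof (H _ (or_introl eq_refl)) as H1. pose proof (H _ (or_intror (or_introl eq_refl))) as H2.
    pose proof (H _ (or_intror (or_intror (or_introl eq_refl)))) as H3. simpl in *. clear H. tauto.
  - intros H s [<-|[<-|[<-|[]]]]; simpl; tauto.
Qed.

Lemma Cdom_inv A x : Cdom A x -> x = cpair (unp1 x) (unp2 x) /\ sdom A (unp1 x) /\ sdom A (unp2 x).
Proof. intros [a [b [c [c' [-> [_ [_ H]]]]]]]. apply W_diag in H. rewrite unp1_cpair, unp2_cpair. tauto. Qed.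

Lemma C_linear A : linear (sdom A) (slt A) -> linear (Cdom A) (Cslt A).
Proof.
  intros [Hi [Ht Htr]]. unfold Cslt. split; [|split].
  - intros x Hx. apply Cdom_inv in Hx as [_ [H1 H2]]. intros [K|[_ K]]; [exact (Hi _ H1 K)|exact (Hi _ H2 K)].
  - intros x y z Hx Hy Hz. apply Cdom_inv in Hx as [_ [X1 X2]]. apply Cdom_inv in Hy as [_ [Y1 Y2]].
    apply Cdom_inv in Hz as [_ [Z1 Z2]].
    intros [K|[E K]] [K'|[E' K']].
    + left; eauto.
    + left. rewrite <- E'. auto.
    + left. rewrite E. auto.
    + right. split. congruence. eauto.
  - intros x y Hx Hy. apply Cdom_inv in Hx as [Ex [X1 X2]]. apply Cdom_inv in Hy as [Ey [Y1 Y2]].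
    destruct (Htr (unp1 x) (unp1 y) X1 Y1) as [E|[K|K]].
    + destruct (Htr (unp2 x) (unp2 y) X2 Y2) as [E'|[K'|K']].
      * left. rewrite Ex, Ey. congruence.
      * right; left; right; auto.
      * right; right; right; auto.
    + right; left; left; auto.
    + right; right; left; auto.
Qed.

Lemma lt_app A (Hl : linear (sdom A) (slt A)) x y : Cdom A x -> Cdom A y -> Cslt A x y ->
  forall phi, In phi (ph4 x y) -> apply_op G (diag A) phi.
Proof.
  intros [a [b [c [c' [-> [H1 [H2 Hw]]]]]]] [a' [b' [d [d' [-> [H3 [H4 Hw']]]]]]] Hlt phi Hphi.
  unfold Cslt in Hlt. rewrite !unp1_cpair, !unp2_cpair in Hlt.
  pose proof Hw as Hw0. pose proof Hw' as Hw0'.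
  apply W_diag in Hw0. apply W_diag in Hw0'.
  destruct Hlt as [Hlt|[<- Hlt]].
  - exists (W a b c c' ++ W a' b' d d' ++ [BPos (ALt a a')]). split.
    + apply G_char. right; left. do 8 eexists. repeat split; eauto.
    + intros s Hs. apply in_app_or in Hs as [Hs|Hs]; auto.
      apply in_app_or in Hs as [Hs|[<-|[]]]; auto. simpl. tauto.
  - exists (W a b c c' ++ W a b' d d' ++ [BPos (ALt b b')]). split.
    + apply G_char. right; right. do 7 eexists. repeat split; eauto.
    + intros s Hs. apply in_app_or in Hs as [Hs|Hs]; auto.
      apply in_app_or in Hs as [Hs|[<-|[]]]; auto. simpl. tauto.
Qed.

Lemma diag_C A : linear (sdom A) (slt A) -> forall s, apply_op G (diag A) s <-> diag (Cstr A) s.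
Proof.
  intros Hl. pose proof (C_linear A Hl) as HC. destruct Hl as [Hi [Ht Htr]].
  assert (Has : forall u v, sdom A u -> sdom A v -> slt A u v -> slt A v u -> False).
  { intros u v Hu Hv H1 H2. apply (Hi u Hu). eauto. }
  intros s. split.
  - intros [alpha [HG Hd]]. apply G_char in HG.
    destruct HG as [H|[H|H]].
    + destruct H as [a [b [c [c' [H1 [H2 [-> Hp]]]]]]].
      assert (Hx : Cdom A (cpair a b)) by (exists a, b, c, c'; auto).
      destruct Hp as [<-|[<-|[]]]; simpl; auto.
      split; auto. split; auto. apply HC; auto.
    + destruct H as [a [b [c [c' [a' [b' [d [d' [H1 [H2 [H3 [H4 [-> Hp]]]]]]]]]]]]].
      assert (Hx : Cdom A (cpair a b)).
      { exists a, b, c, c'. repeat split; auto. intros t Ht'. apply Hd. apply in_or_app; auto. }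
      assert (Hy : Cdom A (cpair a' b')).
      { exists a', b', d, d'. repeat split; auto. intros t Ht'. apply Hd. apply in_or_app; right; apply in_or_app; auto. }
      assert (Hl : diag A (BPos (ALt a a'))). { apply Hd. apply in_or_app; right; apply in_or_app; right; simpl; auto. }
      simpl in Hl. destruct Hl as [Ha [Ha' Hlt]].
      unfold ph4 in Hp. unfold Cslt.
      destruct Hp as [<-|[<-|[<-|[<-|[]]]]]; simpl; unfold Cslt; repeat split; auto; rewrite ?unp1_cpair, ?unp2_cpair.
      * left; auto.
      * intros [H|[E H]]. eauto. subst. eauto.
      * intros E. apply cpair_inj in E as [E _]. subst. eauto.
      * intros E. apply cpair_inj in E as [E _]. subst. eauto.
    + destruct H as [a [b [c [c' [b' [d [d' [H1 [H2 [H3 [H4 [-> Hp]]]]]]]]]]]].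
      assert (Hx : Cdom A (cpair a b)).
      { exists a, b, c, c'. repeat split; auto. intros t Ht'. apply Hd. apply in_or_app; auto. }
      assert (Hy : Cdom A (cpair a b')).
      { exists a, b', d, d'. repeat split; auto. intros t Ht'. apply Hd. apply in_or_app; right; apply in_or_app; auto. }
      assert (Hl : diag A (BPos (ALt b b'))). { apply Hd. apply in_or_app; right; apply in_or_app; right; simpl; auto. }
      simpl in Hl. destruct Hl as [Ha [Ha' Hlt]].
      assert (Hda : sdom A a) by (apply Cdom_inv in Hx; rewrite unp1_cpair in Hx; tauto).
      unfold ph4 in Hp. unfold Cslt.
      destruct Hp as [<-|[<-|[<-|[<-|[]]]]]; simpl; unfold Cslt; repeat split; auto; rewrite ?unp1_cpair, ?unp2_cpair.
      * right; auto.
      * intros [H|[E H]]. eauto. eauto.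
      * intros E. apply cpair_inj in E as [_ E]. subst. eauto.
      * intros E. apply cpair_inj in E as [_ E]. subst. eauto.
  - destruct s as [t|t]; destruct t as [x y|x y]; simpl.
    + intros [Hx [Hy <-]]. destruct Hx as [a [b [c [c' [-> [H1 [H2 Hw]]]]]]].
      exists (W a b c c'). split; auto. apply G_char. left. do 4 eexists. repeat split; eauto. left; auto.
    + intros [Hx [Hy Hlt]]. apply (lt_app A (conj Hi (conj Ht Htr)) x y); simpl; auto.
    + intros [Hx [Hy Hne]]. destruct HC as [_ [_ Htc]].
      destruct (Htc x y Hx Hy) as [E|[H|H]]. contradiction.
      * apply (lt_app A (conj Hi (conj Ht Htr)) x y); simpl; auto.
      * apply (lt_app A (conj Hi (conj Ht Htr)) y x); simpl; auto.
    + intros [Hx [Hy Hn]]. destruct HC as [_ [_ Htc]].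
      destruct (Htc x y Hx Hy) as [E|[H|H]].
      * subst. destruct Hx as [a [b [c [c' [-> [H1 [H2 Hw]]]]]]].
        exists (W a b c c'). split; auto. apply G_char. left. do 4 eexists. repeat split; eauto. right; left; auto.
      * contradiction.
      * apply (lt_app A (conj Hi (conj Ht Htr)) y x); simpl; auto.
Qed.

Definition isoT {T} (D : T -> Prop) (R : T -> T -> Prop) (L : OrdT) :=
  exists h : T -> car L, (forall y, exists x, D x /\ h x = y) /\
    (forall x y, D x -> D y -> h x = h y -> x = y) /\
    (forall x y, D x -> D y -> (R x y <-> olt L (h x) (h y))).
Definition omegaN : OrdT := {| car := nat; olt := lt |}.
Definition gl (Y : OrdT) : OrdT :=
  {| car := nat * car Y; olt := fun p q => fst p < fst q \/ (fst p = fst q /\ olt Y (snd p) (snd q)) |}.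
Definition finpred {T} (D : T -> Prop) (R : T -> T -> Prop) :=
  forall x, D x -> exists l, forall y, D y -> R y x -> In y l.
Definition nomax {T} (D : T -> Prop) (R : T -> T -> Prop) := forall x, D x -> exists y, D y /\ R x y.

Lemma linear_sub {T} (D S : T -> Prop) R : (forall x, S x -> D x) -> linear D R -> linear S R.
Proof. intros HS [Hi [Ht Htr]]. split; [|split]; intros; eauto. Qed.
Lemma finpred_sub {T} (D S : T -> Prop) R : (forall x, S x -> D x) -> finpred D R -> finpred S R.
Proof. intros HS Hf x Hx. destruct (Hf x (HS x Hx)) as [l Hl]. exists l. auto. Qed.

Lemma exists_min {T} (S : T -> Prop) (R : T -> T -> Prop) : linear S R -> finpred S R ->
  forall x, S x -> exists m, S m /\ forall y, S y -> ~ R y m.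
Proof.
  intros [Hi [Ht _]] Hf x Hx.
  destruct (Hf x Hx) as [l Hl].
  assert (Hdec : forall a b : T, {a = b} + {a <> b}) by (intros; apply excluded_middle_informative).
  remember (length l) as N. assert (HN : length l <= N) by lia. clear HeqN.
  revert l x Hx Hl HN. induction N as [|N IH]; intros l x Hx Hl HN.
  - exists x. split; auto. intros y Hy Hyx. destruct l; [|simpl in HN; lia]. apply (Hl y Hy Hyx).
  - destruct (classic (exists y, S y /\ R y x)) as [[y [Hy Hyx]]|Hn].
    + apply (IH (remove Hdec y l) y Hy).
      * intros z Hz Hzy. apply in_in_remove. intros ->. exact (Hi y Hy Hzy). apply Hl; eauto.
      * pose proof (remove_length_lt Hdec l y (Hl y Hy Hyx)). lia.
    + exists x; split; auto. intros y Hy Hyx; apply Hn; eauto.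
Qed.

Definition leastp {T} (i : inhabited T) (S : T -> Prop) (R : T -> T -> Prop) : T :=
  epsilon i (fun m => S m /\ forall y, S y -> ~ R y m).
Lemma leastp_spec {T} i (S : T -> Prop) R : linear S R -> finpred S R -> (exists x, S x) ->
  S (leastp i S R) /\ forall y, S y -> ~ R y (leastp i S R).
Proof.
  intros Hl Hf [x Hx]. unfold leastp. apply epsilon_spec. eapply exists_min; eauto.
Qed.

Fixpoint eseq {T} (i : inhabited T) D R (n : nat) : T :=
  match n with 0 => leastp i D R | S n => leastp i (fun y => D y /\ R (eseq i D R n) y) R end.

Lemma K1 {T} (D : T -> Prop) (R : T -> T -> Prop) : linear D R -> finpred D R -> (exists x, D x) ->
  nomax D R -> isoT D R omegaN.
Proof.
  intros Hl Hf [x0 Hx0] Hnm. pose proof Hl as [Hi [Ht Htr]].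
  set (i := inhabits x0). set (e := eseq i D R).
  assert (F0 : D (e 0) /\ forall y, D y -> ~ R y (e 0)).
  { apply leastp_spec; eauto. }
  assert (FS : forall n, D (e n) -> D (e (S n)) /\ R (e n) (e (S n)) /\
                 forall y, D y -> R (e n) y -> ~ R y (e (S n))).
  { intros n Hn. destruct (Hnm _ Hn) as [y [Hy Hny]].
    assert (HL : linear (fun y => D y /\ R (e n) y) R) by (apply linear_sub with D; [tauto|auto]).
    assert (HF : finpred (fun y => D y /\ R (e n) y) R) by (apply finpred_sub with D; [tauto|auto]).
    destruct (leastp_spec i (fun y => D y /\ R (e n) y) R HL HF) as [[H1 H2] H3]. eauto.
    change (e (S n)) with (leastp i (fun y => D y /\ R (e n) y) R).
    repeat split; auto; intros z Hz Hz2; apply (H3 z); auto. }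
  assert (HD : forall n, D (e n)). { induction n. apply F0. apply FS; auto. }
  assert (Hmono : forall n m, n < m -> R (e n) (e m)).
  { intros n m H. induction H as [|m H IH]. apply FS; auto. apply (Ht _ (e m) _); auto. apply FS; auto. }
  assert (Hinj : forall n m, e n = e m -> n = m).
  { intros n m E. destruct (lt_eq_lt_dec n m) as [[H|H]|H]; auto.
    - apply Hmono in H. rewrite E in H. exfalso; exact (Hi _ (HD m) H).
    - apply Hmono in H. rewrite E in H. exfalso; exact (Hi _ (HD m) H). }
  assert (Hsurj : forall y, D y -> exists n, e n = y).
  { intros y Hy. apply NNPP. intros Hn.
    assert (Hall : forall n, R (e n) y).
    { induction n.
      - destruct (Htr (e 0) y (HD 0) Hy) as [E|[H|H]]; auto.
        + exfalso; apply Hn; eauto.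
        + exfalso; apply (proj2 F0 y Hy H).
      - destruct (Htr (e (S n)) y (HD (S n)) Hy) as [E|[H|H]]; auto.
        + exfalso; apply Hn; eauto.
        + exfalso. apply (proj2 (proj2 (FS n (HD n))) y Hy IHn H). }
    destruct (Hf y Hy) as [l Hl'].
    assert (Hnd : NoDup (map e (seq 0 (S (length l))))).
    { apply Injective_map_NoDup. intros a b; apply Hinj. apply seq_NoDup. }
    assert (Hinc : incl (map e (seq 0 (S (length l)))) l).
    { intros z Hz. apply in_map_iff in Hz as [k [<- _]]. apply Hl'; auto. }
    pose proof (NoDup_incl_length Hnd Hinc). rewrite length_map, length_seq in H. lia. }
  set (h := fun x => epsilon (inhabits 0) (fun n => e n = x)).
  assert (Hh : forall x, D x -> e (h x) = x).
  { intros x Hx. unfold h. apply epsilon_spec. auto. }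
  exists h. split; [|split].
  - intros n. exists (e n). split; [auto|]. apply Hinj. apply Hh; auto.
  - intros x y Hx Hy E. rewrite <- (Hh x Hx), <- (Hh y Hy), E. reflexivity.
  - intros x y Hx Hy. simpl. rewrite <- (Hh x Hx) at 1. rewrite <- (Hh y Hy) at 1. split.
    + intros H. destruct (lt_eq_lt_dec (h x) (h y)) as [[H1|H1]|H1]; auto.
      * rewrite H1 in H. exfalso; exact (Hi _ (HD _) H).
      * exfalso. exact (Hi _ (HD (h x)) (Ht _ _ _ (HD _) (HD _) (HD _) H (Hmono _ _ H1))).
    + apply Hmono.
Qed.

Lemma glue {T} (D : T -> Prop) R (Y : OrdT) (pi : T -> nat) : linear D R ->
  (forall x y, D x -> D y -> R x y -> pi x <= pi y) ->
  (forall n, isoT (fun x => D x /\ pi x = n) R Y) -> isoT D R (gl Y).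
Proof.
  intros [Hi [Ht Htr]] Hm Hf.
  set (hs := fun n => proj1_sig (constructive_indefinite_description _ (Hf n))).
  assert (Hs : forall n, let h := hs n in (forall y, exists x, (D x /\ pi x = n) /\ h x = y) /\
    (forall x y, D x /\ pi x = n -> D y /\ pi y = n -> h x = h y -> x = y) /\
    (forall x y, D x /\ pi x = n -> D y /\ pi y = n -> (R x y <-> olt Y (h x) (h y)))).
  { intros n. exact (proj2_sig (constructive_indefinite_description _ (Hf n))). }
  exists (fun x => (pi x, hs (pi x) x)). split; [|split].
  - intros [n y]. destruct (proj1 (Hs n) y) as [x [[Hx Hp] E]]. exists x. split; auto. simpl. subst. reflexivity.
  - intros x y Hx Hy E. injection E as E1 E2. rewrite <- E1 in E2.
    apply (proj1 (proj2 (Hs (pi x)))); auto.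
  - intros x y Hx Hy. simpl. split.
    + intros H. pose proof (Hm x y Hx Hy H). destruct (Nat.eq_dec (pi x) (pi y)) as [E|E]; [|lia].
      right. split; auto. rewrite <- E. apply (proj2 (proj2 (Hs (pi x)))); auto.
    + intros [H|[E H]].
      * destruct (Htr x y Hx Hy) as [<-|[H'|H']]; auto. lia. pose proof (Hm y x Hy Hx H'). lia.
      * rewrite <- E in H. apply (proj2 (proj2 (Hs (pi x)))); auto.
Qed.

Lemma omega2_crit {T J} (D : T -> Prop) (R : T -> T -> Prop) (rho : T -> J) (DJ : J -> Prop) (RJ : J -> J -> Prop) :
  linear D R -> linear DJ RJ -> finpred DJ RJ ->
  (forall x, D x -> DJ (rho x)) ->
  (forall x y, D x -> D y -> R x y -> RJ (rho x) (rho y) \/ rho x = rho y) ->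
  (forall x, D x -> exists l, forall y, D y -> rho y = rho x -> R y x -> In y l) ->
  (forall j, DJ j -> exists j', DJ j' /\ RJ j j' /\ forall l, exists y, D y /\ rho y = j' /\ ~ In y l) ->
  (exists x, D x) ->
  isoT D R omega2.
Proof.
  intros HL HLJ HFJ H1 H2 H3 H4 [x0 Hx0].
  pose proof HL as [Hi [Ht Htr]]. pose proof HLJ as [HiJ [HtJ HtrJ]].
  set (infin := fun j => forall l, exists y, D y /\ rho y = j /\ ~ In y l).
  set (IJ := fun j => DJ j /\ infin j).
  assert (HIJ : isoT IJ RJ omegaN).
  { apply K1.
    - apply linear_sub with DJ; auto. unfold IJ; tauto.
    - apply finpred_sub with DJ; auto. unfold IJ; tauto.
    - destruct (H4 (rho x0) (H1 _ Hx0)) as [j' [Hj1 [Hj2 Hj3]]]. exists j'. split; auto.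
    - intros j [Hj _]. destruct (H4 j Hj) as [j' [Hj1 [Hj2 Hj3]]]. exists j'. repeat split; auto. }
  destruct HIJ as [hI [HIs [HIi HIo]]].
  set (iJ := inhabits (rho x0)).
  set (nx := fun j => leastp iJ (fun j' => IJ j' /\ (RJ j j' \/ j = j')) RJ).
  assert (Hnx : forall j, DJ j -> (IJ (nx j) /\ (RJ j (nx j) \/ j = nx j)) /\
       forall j', IJ j' /\ (RJ j j' \/ j = j') -> ~ RJ j' (nx j)).
  { intros j Hj. unfold nx. apply (leastp_spec iJ (fun j' => IJ j' /\ (RJ j j' \/ j = j')) RJ).
    - apply linear_sub with DJ; auto. unfold IJ; tauto.
    - apply finpred_sub with DJ; auto. unfold IJ; tauto.
    - destruct (H4 j Hj) as [j' [Hj1 [Hj2 Hj3]]]. exists j'. split; auto. split; auto. }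
  assert (Hnxid : forall j, IJ j -> nx j = j).
  { intros j Hj. destruct (Hnx j (proj1 Hj)) as [[Ha [Hb|Hb]] Hc]; auto.
    exfalso. apply (Hc j); auto. }
  set (leJ := fun a b => RJ a b \/ a = b).
  assert (HleT : forall a b c, DJ a -> DJ b -> DJ c -> leJ a b -> leJ b c -> leJ a c).
  { unfold leJ. intros a b c Ha Hb Hc [E|E] [E'|E']; subst; eauto. }
  set (pi := fun x => hI (nx (rho x))).
  apply (glue D R omegaN pi HL).
  - intros x y Hx Hy Hxy. unfold pi.
    pose proof (H1 _ Hx) as Jx. pose proof (H1 _ Hy) as Jy.
    destruct (Hnx _ Jx) as [[Ix Lx] Mx]. destruct (Hnx _ Jy) as [[Iy Ly] My].
    assert (Hc : ~ RJ (nx (rho y)) (nx (rho x))).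
    { apply Mx. split; auto. apply (HleT _ (rho y)); auto. apply Iy. apply H2; auto. }
    destruct (HtrJ (nx (rho x)) (nx (rho y)) (proj1 Ix) (proj1 Iy)) as [E|[K|K]].
    + rewrite E; lia.
    + apply Nat.lt_le_incl. apply HIo; auto.
    + contradiction.
  - intros n. destruct (HIs n) as [jn [Hjn Ejn]].
    assert (Hfib : forall x, D x -> (pi x = n <-> nx (rho x) = jn)).
    { intros x Hx. unfold pi. split.
      - intros E. apply HIi; auto. apply (Hnx _ (H1 _ Hx)). congruence.
      - intros E. rewrite E; auto. }
    apply K1.
    + apply linear_sub with D; auto. tauto.
    +
      intros x [Hx Hpx]. apply Hfib in Hpx; auto.
      destruct (HFJ (rho x) (H1 _ Hx)) as [lJ HlJ].
      destruct (H3 x Hx) as [l0 Hl0].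
      set (finl := fun j => epsilon (inhabits (@nil T)) (fun l => forall y, D y -> rho y = j -> In y l)).
      exists (l0 ++ flat_map finl lJ). intros y [Hy Hpy] Hyx. apply Hfib in Hpy; auto.
      destruct (H2 y x Hy Hx Hyx) as [K|K].
      * apply in_or_app. right. apply in_flat_map. exists (rho y). split.
        { apply HlJ; auto. }
        assert (Hex : exists l, forall z, D z -> rho z = rho y -> In z l).
        { apply NNPP. intros Hnf.
          assert (HI : IJ (rho y)).
          { split; auto. intros l. apply NNPP. intros Hn. apply Hnf. exists l. intros z Hz Ez.
            apply NNPP. intros Hz'. apply Hn. exists z. auto. }
          apply Hnxid in HI. rewrite HI in Hpy.
          destruct (Hnx _ (H1 _ Hx)) as [[_ Lx] _]. rewrite Hpx in Lx. rewrite <- Hpy in Lx.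
          destruct Lx as [Lx|Lx].
          - apply (HiJ (rho y)); auto. eauto.
          - rewrite Lx in K. exact (HiJ _ (H1 _ Hy) K). }
        pose proof (epsilon_spec (inhabits (@nil T)) _ Hex) as Hsp. unfold finl. apply Hsp; auto.
      * apply in_or_app. left. apply Hl0; auto.
    + assert (Ij : IJ jn) by auto. destruct (proj2 Ij []) as [y [Hy [Ey _]]].
      exists y. split; auto. apply Hfib; auto. rewrite Ey. apply Hnxid; auto.
    + intros x [Hx Hpx]. apply Hfib in Hpx; auto.
      destruct (H3 x Hx) as [l Hl].
      destruct (proj2 Hjn (x :: l)) as [y [Hy [Ey Hny]]].
      assert (Hpy : pi y = n). { apply Hfib; auto. rewrite Ey. apply Hnxid; auto. }
      exists y. split; auto.
      destruct (Htr x y Hx Hy) as [E|[K|K]]; auto.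
      * subst. exfalso. apply Hny. left; auto.
      * exfalso. destruct (H2 y x Hy Hx K) as [K'|K'].
        -- destruct (Hnx _ (H1 _ Hx)) as [[_ Lx] _]. rewrite Hpx in Lx. rewrite Ey in K'.
           destruct Lx as [Lx|Lx].
           ++ exact (HiJ jn (proj1 Hjn) (HtJ _ _ _ (proj1 Hjn) (H1 _ Hx) (proj1 Hjn) K' Lx)).
           ++ rewrite Lx in K'. exact (HiJ _ (proj1 Hjn) K').
        -- apply Hny. right. apply Hl; auto.
Qed.

Lemma escape_list {T} (g : nat -> T) : (forall a b, g a = g b -> a = b) -> forall l, exists t, ~ In (g t) l.
Proof.
  intros Hg l. apply NNPP. intros Hn.
  assert (Hnd : NoDup (map g (seq 0 (S (length l))))).
  { apply Injective_map_NoDup. intros a b; apply Hg. apply seq_NoDup. }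
  assert (Hinc : incl (map g (seq 0 (S (length l)))) l).
  { intros z Hz. apply in_map_iff in Hz as [k [<- _]]. apply NNPP. intros Hk. apply Hn. eauto. }
  pose proof (NoDup_incl_length Hnd Hinc). rewrite length_map, length_seq in H. lia.
Qed.
Lemma escape_big (g : nat -> nat) : (forall a b, g a = g b -> a = b) -> forall N, exists m, N < g m.
Proof.
  intros Hg N. destruct (escape_list g Hg (seq 0 (S N))) as [t Ht]. exists t.
  destruct (le_lt_dec (g t) N) as [H|H]; auto. exfalso. apply Ht. apply in_seq. lia.
Qed.

Definition lex (p q : nat * nat) := fst p < fst q \/ (fst p = fst q /\ snd p < snd q).
Lemma lex_linear : linear (fun _ : nat * nat => True) lex.
Proof.
  unfold lex. split; [|split].
  - intros [a b] _. simpl. lia.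
  - intros [a b] [c d] [e g] _ _ _. simpl. lia.
  - intros [a b] [c d] _ _. simpl. destruct (lt_eq_lt_dec a c) as [[H|H]|H]; [|subst|]; try tauto.
    destruct (lt_eq_lt_dec b d) as [[H|H]|H]; [|subst|]; tauto.
Qed.

Lemma lin_transport {T} (D : T -> Prop) R (L : OrdT) : isoT D R L -> linear (fun _ => True) (olt L) -> linear D R.
Proof.
  intros [h [Hs [Hi Ho]]] [Li [Lt Ltr]]. split; [|split].
  - intros x Hx H. apply Ho in H; auto. eapply Li; eauto.
  - intros x y z Hx Hy Hz H1 H2. apply Ho in H1; auto. apply Ho in H2; auto. apply Ho; auto. eapply Lt; eauto.
  - intros x y Hx Hy. destruct (Ltr (h x) (h y) I I) as [E|[K|K]].
    + left. auto.
    + right; left. apply Ho; auto.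
    + right; right. apply Ho; auto.
Qed.

Fixpoint mxf (f : nat -> nat * nat) (a : nat) : nat :=
  match a with 0 => 0 | S a' => Nat.max (mxf f a') (fst (f a')) end.
Lemma mxf_ge f c a : c < a -> fst (f c) <= mxf f a.
Proof. induction a; simpl; intros H. lia. destruct (Nat.eq_dec c a). subst; lia. specialize (IHa ltac:(lia)). lia. Qed.

Lemma C_omega3 (A : Str) : iso_to A omega2 -> iso_to (Cstr A) omega3.
Proof.
  intros HAi. pose proof HAi as [f [Fs [Fi Fo]]].
  assert (HA : linear (sdom A) (slt A)) by (apply (lin_transport _ _ omega2 HAi); exact lex_linear).
  pose proof (C_linear A HA) as HC.
  pose proof HA as [Ai [At Atr]].
  set (nm := fun p => epsilon (inhabits 0) (fun a => sdom A a /\ f a = p)).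
  assert (Hnm : forall p, sdom A (nm p) /\ f (nm p) = p).
  { intros p. unfold nm. apply epsilon_spec. apply Fs. }
  assert (Hnmf : forall a, sdom A a -> nm (f a) = a).
  { intros a Ha. apply Fi; auto. apply Hnm. apply Hnm. }
  assert (Hnmi : forall p q, nm p = nm q -> p = q).
  { intros p q E. rewrite <- (proj2 (Hnm p)), <- (proj2 (Hnm q)), E. reflexivity. }
  assert (Fo' : forall a b, sdom A a -> sdom A b -> (slt A a b <-> lex (f a) (f b))) by exact Fo.
  change (isoT (Cdom A) (Cslt A) (gl omega2)).
  apply (glue (Cdom A) (Cslt A) omega2 (fun x => fst (f (unp1 x))) HC).
  - intros x y Hx Hy Hxy. apply Cdom_inv in Hx as [_ [X1 X2]]. apply Cdom_inv in Hy as [_ [Y1 Y2]].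
    destruct Hxy as [K|[E K]].
    + apply Fo' in K; auto. unfold lex in K. lia.
    + rewrite E. lia.
  - intros i.
    set (D := fun x => Cdom A x /\ fst (f (unp1 x)) = i).
    set (rho := fun x => (snd (f (unp1 x)), fst (f (unp2 x)))).
    set (DJ := fun p : nat * nat => exists a, sdom A a /\ f a = (i, fst p) /\ snd p <= mxf f a).
    assert (HD : forall x, D x -> x = cpair (unp1 x) (unp2 x) /\ sdom A (unp1 x) /\ sdom A (unp2 x)
                    /\ f (unp1 x) = (i, snd (f (unp1 x)))).
    { intros x [Hx Hi]. apply Cdom_inv in Hx. intuition. rewrite <- Hi. destruct (f (unp1 x)); reflexivity. }
    assert (H4 : forall j, DJ j -> exists j', DJ j' /\ lex j j' /\ forall l, exists y, D y /\ rho y = j' /\ ~ In y l).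
    { intros [j k] _.
      destruct (escape_big (fun m => nm (i, S j + m))) with (N := Nat.max (nm (0,0)) (nm (1,0))) as [m Hm].
      { intros a b E. apply Hnmi in E. injection E. lia. }
      set (a := nm (i, S j + m)). fold a in Hm.
      exists (S j + m, 0). split; [|split].
      - exists a. split. apply Hnm. split. apply Hnm. simpl. lia.
      - unfold lex; simpl. lia.
      - intros l. destruct (escape_list (fun t => cpair a (nm (0, S t)))) with (l := l) as [t Ht].
        { intros u v E. apply cpair_inj in E as [_ E]. apply Hnmi in E. injection E. lia. }
        exists (cpair a (nm (0, S t))). split; [|split]; auto.
        + split.
          * exists a, (nm (0, S t)), (nm (0,0)), (nm (1,0)). split; auto. split. lia. split. lia.
            apply W_diag. repeat split; try apply Hnm.
            -- apply Fo'; try apply Hnm. rewrite !(proj2 (Hnm _)). unfold lex; simpl; lia.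
            -- apply Fo'; try apply Hnm. rewrite !(proj2 (Hnm _)). unfold lex; simpl; lia.
          * rewrite unp1_cpair. unfold a. rewrite (proj2 (Hnm _)). reflexivity.
        + unfold rho. rewrite unp1_cpair, unp2_cpair. unfold a. rewrite !(proj2 (Hnm _)). reflexivity. }
    apply (omega2_crit D (Cslt A) rho DJ lex).
    + apply linear_sub with (Cdom A); auto. unfold D; tauto.
    + apply linear_sub with (fun _ => True); auto. exact lex_linear.
    + intros [j k] _.
      assert (Hl : forall j, exists l, forall j' k', j' < j -> DJ (j', k') -> In (j', k') l).
      { induction j0 as [|j0 [l IH]].
        - exists []. intros. lia.
        - exists (l ++ map (fun k' => (j0, k')) (seq 0 (S (mxf f (nm (i, j0)))))).
          intros j' k' Hj' [a [Ha [Ea Ka]]]. simpl in Ea, Ka. apply in_or_app.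
          destruct (Nat.eq_dec j' j0) as [->|Hne].
          + right. apply in_map_iff. exists k'. split; auto. apply in_seq.
            rewrite <- Ea, Hnmf by auto. lia.
          + left. apply IH; [lia|]. exists a. auto. }
      destruct (Hl j) as [l Hl'].
      exists (l ++ map (fun k' => (j, k')) (seq 0 k)). intros [j' k'] Hd Hlt. unfold lex in Hlt; simpl in Hlt.
      apply in_or_app. destruct Hlt as [Hlt|[-> Hlt]].
      * left. apply Hl'; auto.
      * right. apply in_map_iff. exists k'. split; auto. apply in_seq. lia.
    + intros x Hx. destruct (HD x Hx) as [Ex [Ha [Hb Hf]]].
      destruct Hx as [[a [b [c [c' [Exy [Hc [Hc' Hw]]]]]]] _].
      apply W_diag in Hw as [Ha' [Hb' [Hcd [Hcd' [Hcb Hbc]]]]].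
      exists (unp1 x). split; auto. split. simpl. exact Hf.
      unfold rho; simpl. rewrite Exy, unp1_cpair, unp2_cpair.
      apply Fo' in Hbc; auto. unfold lex in Hbc. pose proof (mxf_ge f c' a Hc'). lia.
    + intros x y Hx Hy Hxy. destruct (HD x Hx) as [Ex [Xa [Xb Xf]]]. destruct (HD y Hy) as [Ey [Ya [Yb Yf]]].
      unfold rho, lex; simpl. destruct Hxy as [K|[E K]].
      * apply Fo' in K; auto. unfold lex in K. rewrite Xf, Yf in K. simpl in K. lia.
      * apply Fo' in K; auto. unfold lex in K. rewrite E. destruct (Nat.eq_dec (fst (f (unp2 x))) (fst (f (unp2 y)))).
        -- right. rewrite e. reflexivity.
        -- left. right. split; auto. lia.
    + intros x Hx. destruct (HD x Hx) as [Ex [Xa [Xb Xf]]].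
      exists (map (fun l' => cpair (unp1 x) (nm (fst (f (unp2 x)), l'))) (seq 0 (snd (f (unp2 x))))).
      intros y Hy Er Hyx. destruct (HD y Hy) as [Ey [Ya [Yb Yf]]].
      unfold rho in Er. injection Er as E1 E2.
      assert (Ea : unp1 y = unp1 x). { apply Fi; auto. rewrite Xf, Yf, E1. reflexivity. }
      destruct Hyx as [K|[_ K]].
      * rewrite Ea in K. exfalso; exact (Ai _ Xa K).
      * apply Fo' in K; auto. unfold lex in K.
        apply in_map_iff. exists (snd (f (unp2 y))). split.
        -- transitivity (cpair (unp1 y) (unp2 y)); [|symmetry; exact Ey]. rewrite Ea. f_equal. rewrite <- E2. rewrite <- surjective_pairing. apply Hnmf; auto.
        -- apply in_seq. lia.
    + exact H4.
    + destruct (H4 (0, 0)) as [j' [_ [_ Hinf]]].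
      { exists (nm (i, 0)). split. apply Hnm. split. apply Hnm. simpl. lia. }
      destruct (Hinf []) as [y [Hy _]]. eauto.
Qed.

Definition agree (S1 S2 : Str) := (forall x, sdom S1 x <-> sdom S2 x) /\
  (forall x y, sdom S1 x -> sdom S1 y -> (slt S1 x y <-> slt S2 x y)).
Lemma diag_agree S1 S2 : (forall s, diag S1 s <-> diag S2 s) -> agree S1 S2.
Proof.
  intros H. split.
  - intros x. pose proof (H (BPos (AEq x x))) as Hx. simpl in Hx. tauto.
  - intros x y Hx Hy. pose proof (H (BPos (ALt x y))) as Hxy. simpl in Hxy. split.
    + intros K. apply Hxy; auto.
    + intros K. apply Hxy; auto. pose proof (H (BPos (AEq x x))). pose proof (H (BPos (AEq y y))). simpl in *. tauto.
Qed.
Lemma iso_agree S1 S2 L : agree S1 S2 -> iso_to S1 L -> iso_to S2 L.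
Proof.
  intros [Hd Hl] [f [Fs [Fi Fo]]]. exists f. split; [|split].
  - intros p. destruct (Fs p) as [x [Hx E]]. exists x. split; auto. apply Hd; auto.
  - intros x y Hx Hy. apply Fi; apply Hd; auto.
  - intros x y Hx Hy. apply Hd in Hx. apply Hd in Hy. rewrite <- Hl; auto.
Qed.
Definition revS (S : Str) : Str := {| sdom := sdom S; slt := fun x y => slt S y x |}.
Lemma iso_rev S L : iso_to S L -> iso_to (revS S) (reverse L).
Proof. intros [f [Fs [Fi Fo]]]. exists f. split; [|split]; auto. intros x y Hx Hy. simpl. apply Fo; auto. Qed.

Lemma C_rev A : iso_to A (reverse omega2) -> iso_to (Cstr A) (reverse omega3).
Proof.
  intros H. apply iso_rev in H. pose proof (C_omega3 (revS A) H) as H2.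
  apply iso_rev in H2. revert H2. apply iso_agree. split.
  - intros x. simpl. unfold Cdom. split.
    + intros [a [b [c [c' [E [H1 [H2 Hw]]]]]]]. exists a, b, c', c. repeat split; auto.
      apply W_diag in Hw. apply W_diag. simpl in Hw. tauto.
    + intros [a [b [c [c' [E [H1 [H2 Hw]]]]]]]. exists a, b, c', c. repeat split; auto.
      apply W_diag in Hw. apply W_diag. simpl. tauto.
  - intros x y _ _. simpl. unfold Cslt. simpl. split; intros [K|[E K]]; auto.
Qed.

Lemma str_iso_of A B L : iso_to A L -> iso_to B L -> str_iso A B.
Proof.
  intros [fA [As [Ai Ao]]] [fB [Bs [Bi Bo]]].
  set (g := fun x => epsilon (inhabits 0) (fun y => sdom B y /\ fB y = fA x)).
  assert (Hg : forall x, sdom B (g x) /\ fB (g x) = fA x) by (intros x; apply epsilon_spec; apply Bs).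
  exists g. split; [|split; [|split]].
  - intros x _. apply Hg.
  - intros y Hy. destruct (As (fB y)) as [x [Hx E]]. exists x. split; auto. apply Bi; auto. apply Hg.
    rewrite (proj2 (Hg x)). auto.
  - intros x y Hx Hy E. apply Ai; auto. rewrite <- (proj2 (Hg x)), <- (proj2 (Hg y)), E. reflexivity.
  - intros x y Hx Hy. rewrite Ao, Bo by (auto; apply Hg). rewrite (proj2 (Hg x)), (proj2 (Hg y)). tauto.
Qed.

Lemma iso_of_str A B L : str_iso A B -> iso_to A L -> iso_to B L.
Proof.
  intros [g [Gd [Gs [Gi Go]]]] [fA [As [Ai Ao]]].
  set (gi := fun y => epsilon (inhabits 0) (fun x => sdom A x /\ g x = y)).
  assert (Hgi : forall y, sdom B y -> sdom A (gi y) /\ g (gi y) = y) by (intros y Hy; apply epsilon_spec; apply Gs; auto).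
  exists (fun y => fA (gi y)). split; [|split].
  - intros p. destruct (As p) as [x [Hx E]]. exists (g x). split; auto.
    assert (gi (g x) = x). { apply Gi; auto. apply Hgi; auto. apply Hgi; auto. }
    rewrite H; auto.
  - intros y1 y2 H1 H2 E. apply Ai in E; try apply Hgi; auto.
    rewrite <- (proj2 (Hgi y1 H1)), <- (proj2 (Hgi y2 H2)), E. reflexivity.
  - intros y1 y2 H1 H2. rewrite <- Ao by (apply Hgi; auto).
    rewrite Go by (apply Hgi; auto). rewrite (proj2 (Hgi y1 H1)), (proj2 (Hgi y2 H2)). tauto.
Qed.

Lemma no_both X (L : OrdT) (z : car L) : linear (fun _ => True) (olt L) ->
  (forall p, p <> z -> olt L z p) -> (forall p, exists q, olt L p q) ->
  iso_to X L -> iso_to X (reverse L) -> False.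
Proof.
  intros [Li [Lt _]] Hz Hnt [f1 [S1 [I1 O1]]] [f2 [S2 [I2 O2]]].
  destruct (S1 z) as [x [Hx Ex]].
  destruct (Hnt (f2 x)) as [q Hq]. destruct (S2 q) as [y [Hy Ey]].
  assert (Hyx : y <> x). { intros ->. rewrite Ey in Hq. exact (Li _ I Hq). }
  assert (Hxy : slt X x y).
  { apply O1; auto. rewrite Ex. apply Hz. intros E. apply Hyx. apply I1; auto. congruence. }
  apply O2 in Hxy; auto. simpl in Hxy. rewrite Ey in Hxy.
  exact (Li _ I (Lt _ _ _ I I I Hq Hxy)).
Qed.

Lemma gl_linear Y : linear (fun _ => True) (olt Y) -> linear (fun _ => True) (olt (gl Y)).
Proof.
  intros [Li [Lt Ltr]]. split; [|split]; simpl.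
  - intros [a b] _. simpl. intros [H|[_ H]]. lia. exact (Li _ I H).
  - intros [a b] [c d] [e g] _ _ _. simpl. intros [H|[E H]] [H'|[E' H']]; try lia.
    right. split. lia. eapply Lt; eauto.
  - intros [a b] [c d] _ _. simpl. destruct (lt_eq_lt_dec a c) as [[H|H]|H]; [tauto| |tauto].
    subst. destruct (Ltr b d I I) as [->|[H|H]]; tauto.
Qed.
Lemma omegaN_linear : linear (fun _ => True) (olt omegaN).
Proof. split; [|split]; simpl; intros; lia. Qed.
Lemma omega2_linear : linear (fun _ => True) (olt omega2).
Proof. exact (gl_linear omegaN omegaN_linear). Qed.
Lemma omega3_linear : linear (fun _ => True) (olt omega3).
Proof. exact (gl_linear omega2 omega2_linear). Qed.
Lemma rev_linear L : linear (fun _ => True) (olt L) -> linear (fun _ => True) (olt (reverse L)).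
Proof. intros [Li [Lt Ltr]]. split; [|split]; simpl; intros; eauto. destruct (Ltr x y I I); tauto. Qed.

Lemma no2 X : iso_to X omega2 -> iso_to X (reverse omega2) -> False.
Proof.
  apply (no_both X omega2 (0,0) omega2_linear).
  - intros [a b] H. simpl. destruct a; [destruct b|]; [congruence|lia|lia].
  - intros [a b]. exists (S a, 0). simpl. lia.
Qed.
Lemma no3 X : iso_to X omega3 -> iso_to X (reverse omega3) -> False.
Proof.
  apply (no_both X omega3 (0,(0,0)) omega3_linear).
  - intros [a [b c]] H. simpl. destruct a; [destruct b; [destruct c|]|]; [congruence|lia|lia|lia].
  - intros [a b]. exists (S a, (0,0)). simpl. lia.
Qed.

Lemma class_linear A : class2 omega2 (reverse omega2) A -> linear (sdom A) (slt A).
Proof.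
  intros [H|H]; eapply lin_transport; eauto.
  exact omega2_linear. exact (rev_linear _ omega2_linear).
Qed.

Theorem theorem6p2 :
  comp_embeds (class2 omega2 (reverse omega2)) (class2 omega3 (reverse omega3)).
Proof.
  exists G. split; [exact G_ce|split].
  - intros A HA. exists (Cstr A). split.
    + destruct HA as [H|H]; [left; apply C_omega3 | right; apply C_rev]; auto.
    + apply diag_C. apply class_linear; auto.
  - intros A B C D HA HB HC HD.
    assert (AC : agree (Cstr A) C).
    { apply diag_agree. intros s. rewrite <- HC. symmetry. apply diag_C. apply class_linear; auto. }
    assert (BD : agree (Cstr B) D).
    { apply diag_agree. intros s. rewrite <- HD. symmetry. apply diag_C. apply class_linear; auto. }
    destruct HA as [HA|HA]; destruct HB as [HB|HB].
    + split; intros _.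
      * eapply str_iso_of; eapply iso_agree; eauto; apply C_omega3; auto.
      * eapply str_iso_of; eauto.
    + split; intros H; exfalso.
      * apply (no2 B); auto. eapply iso_of_str; eauto.
      * apply (no3 D). eapply iso_of_str; eauto. eapply iso_agree; eauto. apply C_omega3; auto.
        eapply iso_agree; eauto. apply C_rev; auto.
    + split; intros H; exfalso.
      * apply (no2 B); auto. eapply iso_of_str; eauto.
      * apply (no3 D). eapply iso_agree; eauto. apply C_omega3; auto.
        eapply iso_of_str; eauto. eapply iso_agree; eauto. apply C_rev; auto.
    + split; intros _.
      * eapply str_iso_of; eapply iso_agree; eauto; apply C_rev; auto.
      * eapply str_iso_of; eauto.
Qed.
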